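(* Let $x_1,\dots,x_N\in\mathbb{R}^q$, let $\hat x_0\in\mathbb{R}^q$ be arbitrary, and define the median shift sequence by $$C_n=\{i: \|\hat x_n-x_i\|_1<1\},\qquad \hat x_{n+1}=\mathrm{Med}(\{x_i: i\in C_n\}),$$ where $\mathrm{Med}$ is the coordinatewise median defined in the context (and $\mathrm{Med}(\emptyset)=c$ for a fixed point $c\in\mathbb{R}^q$). Then $(\hat x_n)$ is stationary (constant from some index on), for any initialization $\hat x_0$.
   Context: $\|\cdot\|_1$ is the $L_1$ norm on $\mathbb{R}^q$. For a nonempty finite family of points of $\mathbb{R}^q$ (indexed by a subset of $\{1,\dots,N\}$), $\mathrm{Med}$ returns the point whose $k$-th coordinate is the median of the $k$-th coordinates of the family, where for an even number of values the median is taken as the average of the two middle values; thus $\mathrm{Med}$ depends only on the index set and is a minimizer of $x\mapsto\sum_i\|x-x_i\|_1$ over the family. *)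

(* Defs.v *)
(* Reals are modelled by an arbitrary real field R
   (realFieldType), which includes the real numbers; the statement is
   purely order-theoretic/algebraic. *)
From HB Require Import structures.
From mathcomp Require Import all_boot all_order all_algebra.
Set Implicit Arguments. Unset Strict Implicit. Unset Printing Implicit Defensive.
Import Order.TTheory GRing.Theory Num.Theory.
Local Open Scope ring_scope.

Section MedianShift.
Variable R : realFieldType.

Definition l1dist (q : nat) (x y : 'rV[R]_q) : R :=
  \sum_(k < q) `|x ord0 k - y ord0 k|.

Definition median (s : seq R) : R :=
  let t := sort <=%R s in
  let n := size t in
  if odd n then t`_(n./2)
  else (t`_(n./2).-1 + t`_(n./2)) / 2%:R.

Definition Med (q N : nat) (c : 'rV[R]_q) (X : 'I_N -> 'rV[R]_q)
    (C : {set 'I_N}) : 'rV[R]_q :=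
  if C == set0 then c
  else \row_(k < q) median [seq X i ord0 k | i <- enum C].

Definition window (q N : nat) (X : 'I_N -> 'rV[R]_q) (xh : 'rV[R]_q)
    : {set 'I_N} :=
  [set i | l1dist xh (X i) < 1].

Fixpoint median_shift (q N : nat) (c : 'rV[R]_q) (X : 'I_N -> 'rV[R]_q)
    (x0 : 'rV[R]_q) (n : nat) : 'rV[R]_q :=
  match n with
  | 0 => x0
  | n'.+1 => Med c X (window X (median_shift c X x0 n'))
  end.

End MedianShift.

(* Main.v *)
Require Import Defs.
From HB Require Import structures.
From mathcomp Require Import all_boot all_order all_algebra.
From mathcomp Require Import lra zify.
Set Implicit Arguments. Unset Strict Implicit. Unset Printing Implicit Defensive.
Import Order.TTheory GRing.Theory Num.Theory.
Local Open Scope ring_scope.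

Section Med.
Variable R : realFieldType.
Implicit Types (s : seq R) (m a : R).

Lemma sum_diff_ge s m a : m <= a ->
  (a - m) * ((count (fun y => y <= m) s)%:R - (count (fun y => m < y) s)%:R)
  <= \sum_(y <- s) `|a - y| - \sum_(y <- s) `|m - y|.
Proof.
move=> ma; elim: s => [|y s IH]; first by rewrite !big_nil /= subrr mulr0.
rewrite !big_cons /= !natrD.
case: (leP y m) => ym /=.
- rewrite (ger0_norm (_ : 0 <= a - y)); last by rewrite subr_ge0 (le_trans ym).
  rewrite (ger0_norm (_ : 0 <= m - y)); last by rewrite subr_ge0.
  rewrite add0r. move: IH; set A := \sum_(_ <- _) _; set B := \sum_(_ <- _) _.
  set u := (count _ _)%:R; set v := (count _ _)%:R. move=> IH. nra.
- rewrite (ltr0_norm (_ : m - y < 0)); last by rewrite subr_lt0.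
  have h := ler_norm (y - a). rewrite distrC in h.
  rewrite add0r. move: IH h; set A := \sum_(_ <- _) _; set B := \sum_(_ <- _) _.
  set u := (count _ _)%:R; set v := (count _ _)%:R. move=> IH h. nra.
Qed.

Lemma sum_diff_le s m a : a <= m ->
  (m - a) * ((count (fun y => m <= y) s)%:R - (count (fun y => y < m) s)%:R)
  <= \sum_(y <- s) `|a - y| - \sum_(y <- s) `|m - y|.
Proof.
move=> ma; elim: s => [|y s IH]; first by rewrite !big_nil /= subrr mulr0.
rewrite !big_cons /= !natrD.
case: (leP m y) => ym /=.
- rewrite (ler0_norm (_ : a - y <= 0)); last by rewrite subr_le0 (le_trans ma).
  rewrite (ler0_norm (_ : m - y <= 0)); last by rewrite subr_le0.
  rewrite add0r. move: IH; set A := \sum_(_ <- _) _; set B := \sum_(_ <- _) _.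
  set u := (count _ _)%:R; set v := (count _ _)%:R. move=> IH. nra.
- rewrite (gtr0_norm (_ : 0 < m - y)); last by rewrite subr_gt0.
  have h := ler_norm (a - y).
  rewrite add0r. move: IH h; set A := \sum_(_ <- _) _; set B := \sum_(_ <- _) _.
  set u := (count _ _)%:R; set v := (count _ _)%:R. move=> IH h. nra.
Qed.

Lemma count_min s m :
  leq (count (fun y => m < y) s) (count (fun y => y <= m) s) ->
  leq (count (fun y => y < m) s) (count (fun y => m <= y) s) ->
  forall a, \sum_(y <- s) `|m - y| <= \sum_(y <- s) `|a - y|.
Proof.
move=> h1 h2 a; rewrite -subr_ge0.
case: (leP m a) => ma.
- apply: le_trans (sum_diff_ge s ma); apply: mulr_ge0; first by rewrite subr_ge0.
  by rewrite subr_ge0 ler_nat.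
- apply: le_trans (sum_diff_le s (ltW ma)); apply: mulr_ge0; first by rewrite subr_ge0 ltW.
  by rewrite subr_ge0 ler_nat.
Qed.
End Med.
Section Med2.
Variable R : realFieldType.
Implicit Types (s t : seq R) (m a : R).

Lemma cnt_le t j : sorted <=%R t -> (j < size t)%N ->
  leq j.+1 (count (fun y => y <= t`_j) t).
Proof.
move=> st hj.
rewrite -[t in count _ t](cat_take_drop j.+1) count_cat.
apply: leq_trans (leq_addr _ _).
have Hs : size (take j.+1 t) = j.+1 by rewrite size_takel.
suff /eqP -> : count (fun y => y <= t`_j) (take j.+1 t) == size (take j.+1 t) by rewrite Hs.
rewrite -all_count; apply/(all_nthP 0) => i; rewrite Hs => hi.
rewrite nth_take //; apply: le_sorted_leq_nth => //; rewrite ?inE /=; lia.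
Qed.

Lemma cnt_ge t j : sorted <=%R t -> (j < size t)%N ->
  leq (size t - j) (count (fun y => t`_j <= y) t).
Proof.
move=> st hj.
rewrite -[t in count _ t](cat_take_drop j) count_cat.
apply: leq_trans (leq_addl _ _).
have Hs : size (drop j t) = (size t - j)%N by rewrite size_drop.
suff /eqP -> : count (fun y => t`_j <= y) (drop j t) == size (drop j t) by rewrite Hs.
rewrite -all_count; apply/(all_nthP 0) => i; rewrite Hs => hi.
rewrite nth_drop //; apply: le_sorted_leq_nth => //; rewrite ?inE /=; lia.
Qed.

Lemma median_counts s : s != [::] ->
  leq (count (fun y => median s < y) s) (count (fun y => y <= median s) s) /\
  leq (count (fun y => y < median s) s) (count (fun y => median s <= y) s).
Proof.
move=> s0.
have st : sorted <=%R (sort <=%R s) := sort_le_sorted s.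
have pc : forall P, count P s = count P (sort <=%R s).
  move=> P; apply/esym/permP; by rewrite (perm_sort <=%R s s) perm_refl.
have pos : (0 < size (sort <=%R s))%N by rewrite size_sort; case: (s) s0.
rewrite !pc /median.
move: st pos; set t := sort _ s => st pos.
have c1 : forall m, addn (count (fun y => m < y) t) (count (fun y => y <= m) t) = size t.
  move=> m; rewrite addnC -(count_predC (fun y => y <= m) t); congr (_ + _)%N.
  by apply: eq_count => y /=; rewrite ltNge.
have c2 : forall m, addn (count (fun y => y < m) t) (count (fun y => m <= y) t) = size t.
  move=> m; rewrite addnC -(count_predC (fun y => m <= y) t); congr (_ + _)%N.
  by apply: eq_count => y /=; rewrite ltNge.
have hn := odd_double_half (size t).
case: ifP => hodd; rewrite hodd /= -addnn in hn.
- have hh : ((size t)./2 < size t)%N by move: hn pos; clear; lia.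
  have h1 := cnt_le st hh.
  have h2 := cnt_ge st hh.
  move: h1 h2 (c1 t`_(size t)./2) (c2 t`_(size t)./2) hn.
  move: (count _ t) (count _ t) (count _ t) (count _ t) => A B C D.
  move: (size t) ((size t)./2) => n k. clear. lia.
- have hh : ((size t)./2 < size t)%N.
    move: hn pos. clear. move: (size t) ((size t)./2) => n k. lia.
  have hh' : ((size t)./2.-1 < size t)%N by move: hh; clear; lia.
  have tle : t`_(size t)./2.-1 <= t`_(size t)./2.
    apply: le_sorted_leq_nth => //; rewrite ?inE /=; lia.
  set m := (t`_(size t)./2.-1 + t`_(size t)./2) / 2%:R.
  have m1 : t`_(size t)./2.-1 <= m by rewrite /m ler_pdivlMr ?ltr0n //; lra.
  have m2 : m <= t`_(size t)./2 by rewrite /m ler_pdivrMr ?ltr0n //; lra.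
  have h1 := cnt_le st hh'.
  have h2 := cnt_ge st hh.
  have e1 : leq (count (fun y => y <= t`_(size t)./2.-1) t) (count (fun y => y <= m) t).
    by apply: sub_count => y /= hy; apply: le_trans m1.
  have e2 : leq (count (fun y => t`_(size t)./2 <= y) t) (count (fun y => m <= y) t).
    by apply: sub_count => y /= hy; apply: le_trans hy.
  move: h1 h2 e1 e2 (c1 m) (c2 m) hn pos.
  move: (count _ t) (count _ t) (count _ t) (count _ t) (count _ t) (count _ t).
  move: (size t) ((size t)./2) => n k. clear. lia.
Qed.
End Med2.

Section Main.
Variable R : realFieldType.

Lemma median_opt (s : seq R) : s != [::] ->
  forall a, \sum_(y <- s) `|median s - y| <= \sum_(y <- s) `|a - y|.
Proof. by move=> s0; have [h1 h2] := median_counts s0; apply: count_min. Qed.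

Variables (q N : nat) (X : 'I_N -> 'rV[R]_q) (c : 'rV[R]_q).

Lemma Med_opt (C : {set 'I_N}) (x : 'rV[R]_q) :
  \sum_(i in C) l1dist (Med c X C) (X i) <= \sum_(i in C) l1dist x (X i).
Proof.
rewrite /Med; case: eqP => [->|/eqP C0]; first by rewrite !big_set0.
rewrite /l1dist (exchange_big _ _ (index_enum _)) [X in _ <= X](exchange_big _ _ (index_enum _)) /=.
apply: ler_sum => k _; rewrite mxE.
rewrite -!big_enum /=.
rewrite -(big_map (fun i => X i ord0 k) xpredT (fun y => `|median [seq X i ord0 k | i <- enum C] - y|)).
rewrite -(big_map (fun i => X i ord0 k) xpredT (fun y => `|x ord0 k - y|)).
apply: median_opt.
case/set0Pn: C0 => i iC.
have : i \in enum C by rewrite mem_enum.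
by case: (enum C).
Qed.

Definition dd (x : 'rV[R]_q) i := l1dist x (X i).
Definition VV (x : 'rV[R]_q) := \sum_(i < N) Num.min (dd x i) 1.
Definition ff (x : 'rV[R]_q) := Med c X (window X x).

Lemma descent x : VV (ff x) <= VV x /\
  (VV x <= VV (ff x) -> window X (ff x) \subset window X x).
Proof.
set W := window X x; set y := ff x.
have eVx : VV x = \sum_(i in W) dd x i + \sum_(i | i \notin W) 1.
  rewrite /VV (bigID (fun i => i \in W)) /=; congr (_ + _); apply: eq_bigr => i.
    by rewrite inE => h; rewrite min_l // ltW.
  by rewrite inE -leNgt => h; rewrite min_r.
have eVy : VV y = \sum_(i in W) Num.min (dd y i) 1 + \sum_(i | i \notin W) Num.min (dd y i) 1.
  by rewrite /VV (bigID (fun i => i \in W)).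
have l1 : \sum_(i in W) Num.min (dd y i) 1 <= \sum_(i in W) dd y i.
  by apply: ler_sum => i _; rewrite ge_min lexx.
have l2 : \sum_(i in W) dd y i <= \sum_(i in W) dd x i by apply: Med_opt.
have eS : \sum_(i | i \notin W) 1 - \sum_(i | i \notin W) Num.min (dd y i) 1
   = \sum_(i | i \notin W) (1 - Num.min (dd y i) (1 : R)).
  by rewrite sumrB.
have S0 : forall i, i \notin W -> 0 <= 1 - Num.min (dd y i) (1 : R).
  by move=> i _; rewrite subr_ge0 ge_min lexx orbT.
have Sge : 0 <= \sum_(i | i \notin W) (1 - Num.min (dd y i) (1 : R)) by apply: sumr_ge0.
split; first by rewrite eVx eVy; lra.
rewrite eVx eVy.
move=> hle; have S00 : \sum_(i | i \notin W) (1 - Num.min (dd y i) (1 : R)) = 0.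
  by apply/le_anti/andP; split => //; lra.
apply/subsetP => i; rewrite [i \in window X y]inE => hy.
apply/negPn/negP => hx.
have := psumr_eq0P S0 S00 hx.
rewrite min_l; last by rewrite ltW.
by move/eqP; rewrite subr_eq0 => /eqP h; move: hy; rewrite -/(dd y i) -h ltxx.
Qed.

Variable x0 : 'rV[R]_q.
Definition xs n := median_shift c X x0 n.
Lemma xsS n : xs n.+1 = ff (xs n). Proof. by []. Qed.

Definition cnt (v : R) := #|[set C : {set 'I_N} | VV (Med c X C) < v]|.
Definition mu n := (cnt (VV (xs n.+1)) * N.+1 + #|window X (xs n.+1)|)%N.

Lemma step n : (mu n.+1 < mu n)%N \/ xs n.+3 = xs n.+2.
Proof.
rewrite /mu.
have e2 : xs n.+2 = ff (xs n.+1) by [].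
have e3 : xs n.+3 = ff (xs n.+2) by [].
have [d1 d2] := descent (xs n.+1).
rewrite -e2 in d1 d2.
have wN : forall w : {set 'I_N}, (#|w| <= N)%N.
  by move=> w; rewrite -[X in (_ <= X)%N](card_ord N) max_card.
case: (ltP (VV (xs n.+2)) (VV (xs n.+1))) => hv.
- left.
  have hc : (cnt (VV (xs n.+2)) < cnt (VV (xs n.+1)))%N.
    apply: proper_card; apply/properP; split.
      apply/subsetP => C; rewrite !inE => h; exact: lt_trans h hv.
    exists (window X (xs n.+1)); rewrite !inE.
      by rewrite -/(ff (xs n.+1)) -e2.
    by rewrite -/(ff (xs n.+1)) -e2 ltxx.
  have := wN (window X (xs n.+2)); have := wN (window X (xs n.+1)).
  move: hc; move: (cnt _) (cnt _) (#|_|) (#|_|) => a b u v. nia.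
- have ev : VV (xs n.+2) = VV (xs n.+1) by apply/le_anti; rewrite hv d1.
  have sub := d2 hv.
  rewrite ev.
  case: (ltnP #|window X (xs n.+2)| #|window X (xs n.+1)|) => hw.
    by left; rewrite ltn_add2l.
  right.
  have /eqP ew : window X (xs n.+2) == window X (xs n.+1) by rewrite eqEcard sub hw.
  by rewrite e3 /ff ew -/(ff (xs n.+1)) -e2.
Qed.

Lemma fixpt : exists m, xs m.+1 = xs m.
Proof.
suff : forall k n, (mu n <= k)%N -> exists m, xs m.+1 = xs m by move/(_ (mu 0) 0); apply.
elim => [|k IH] n hn.
  case: (step n) => [h|h]; last by exists n.+2.
  by move: (leq_trans h hn); rewrite ltn0.
case: (step n) => [h|h]; last by exists n.+2.
by apply: (IH n.+1); rewrite -ltnS (leq_trans h).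
Qed.

End Main.

Theorem proposition4 (R : realFieldType) (q N : nat)
    (X : 'I_N -> 'rV[R]_q) (c x0 : 'rV[R]_q) :
  exists n0 : nat, forall n : nat, (n0 <= n)%N ->
    median_shift c X x0 n = median_shift c X x0 n0.
Proof.
have [m hm] := fixpt X c x0.
exists m => n hn.
have H : forall j, xs X c x0 (m + j) = xs X c x0 m.
  elim => [|j IH]; first by rewrite addn0.
  by rewrite addnS xsS IH -xsS hm.
by rewrite -(subnKC hn); apply: H.
Qed.
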